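(* For all positive integers $k$ and $i$ with $1\le i\le k$, the sets $\Pi_{i,k}$ and $\Pi_{i,k}^c$ are minimal unavoidable sets.
   Context: For $\sigma\in S_n$, the cyclic permutation $[\sigma]$ is the set of all rotations of $\sigma$. For $\pi\in S_k$, the totally vincular pattern $\overline{\pi}$ is $\pi$ with all adjacent positions overlined; a cyclic permutation $[\sigma]$ of length $n\ge k$ contains $\overline{\pi}$ if some $k$ cyclically consecutive entries $\sigma_j\sigma_{j+1}\cdots\sigma_{j+k-1}$ (indices mod $n$) are order-isomorphic to $\pi$. $\overline{S_k}$ is the set of totally vincular patterns of length $k$. For $\Pi\subseteq\overline{S_k}$, $\mathrm{Av}_n[\Pi]$ is the set of cyclic permutations of length $n$ containing no pattern of $\Pi$. $\Pi$ is unavoidable if $|\mathrm{Av}_n[\Pi]|=0$ for all sufficiently large $n$, and avoidable otherwise; $\Pi$ is a minimal unavoidable set if it is unavoidable but every proper subset is avoidable. $\Pi_{i,k}$ is the set of all $\overline{\pi}\in\overline{S_k}$ with $\pi_i=1$, and $\Pi_{i,k}^c$ is the set of all $\overline{\pi}\in\overline{S_k}$ with $\pi_i=k$. *)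

(* Defs.v *)
From mathcomp Require Import all_boot all_fingroup.
Set Implicit Arguments. Unset Strict Implicit. Unset Printing Implicit Defensive.

(* Permutations of length n are elements of 'S_n (values 0..n-1, an
   order-preserving shift of 1..n, irrelevant for order-isomorphism). *)

Definition cyc_entry (n : nat) (s : 'S_n) (m : nat) : nat :=
  if insub (m %% n) is Some x then val (s x) else 0.

(* The cyclic permutation [s] contains the totally vincular pattern
   overline(p): n >= k and some k cyclically consecutive entries
   s_j ... s_{j+k-1} are order-isomorphic to p.  This depends only on
   the rotation class [s]. *)
Definition cyc_contains (k : nat) (p : 'S_k) (n : nat) (s : 'S_n) : Prop :=
  k <= n /\ exists j : 'I_n, forall a b : 'I_k,
    (cyc_entry s (j + a) < cyc_entry s (j + b)) = (p a < p b).

Definition cyc_avoids (k : nat) (Pi : {set 'S_k}) (n : nat) (s : 'S_n) : Prop :=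
  forall p, p \in Pi -> ~ cyc_contains p s.

Definition unavoidable (k : nat) (Pi : {set 'S_k}) : Prop :=
  exists N, forall n, N <= n -> forall s : 'S_n, ~ cyc_avoids Pi s.

Definition avoidable (k : nat) (Pi : {set 'S_k}) : Prop := ~ unavoidable Pi.

Definition minimal_unavoidable (k : nat) (Pi : {set 'S_k}) : Prop :=
  unavoidable Pi /\ forall Pi' : {set 'S_k}, Pi' \proper Pi -> avoidable Pi'.

(* Pi_{i,k}: patterns with pi_i = 1 (1-indexed position i, smallest value). *)
Definition Pi_min (k i : nat) : {set 'S_k} :=
  [set p : 'S_k | [exists a : 'I_k, (val a == i.-1) && (val (p a) == 0)]].

Definition Pi_max (k i : nat) : {set 'S_k} :=
  [set p : 'S_k | [exists a : 'I_k, (val a == i.-1) && (val (p a) == k.-1)]].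

(* Main.v *)
Require Import Defs.
From mathcomp Require Import all_boot all_fingroup zify.
Set Implicit Arguments. Unset Strict Implicit. Unset Printing Implicit Defensive.

Lemma card_lt_ord k (c : nat) : c <= k -> #|[set v : 'I_k | v < c]| = c.
Proof.
move=> ck.
have -> : [set v : 'I_k | v < c] = [set widen_ord ck v | v : 'I_c].
  apply/setP=> v; rewrite inE; apply/idP/imsetP.
  - move=> vc; exists (Ordinal vc) => //; exact: val_inj.
  - by case=> w _ ->; rewrite /= ltn_ord.
by rewrite card_imset ?card_ord //; move=> x y /(congr1 val) /= /val_inj.
Qed.

Lemma rank_perm k (q : 'S_k) a : #|[set b | q b < q a]| = q a.
Proof.
transitivity #|[set v : 'I_k | v < q a]|; last exact: card_lt_ord (ltnW (ltn_ord _)).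
have -> : [set v : 'I_k | v < q a] = q @: [set b | q b < q a].
  apply/setP=> v; rewrite inE; apply/idP/imsetP.
  - move=> h; exists (q^-1 v)%g; rewrite ?inE permKV //.
  - by case=> w; rewrite inE => h ->.
by rewrite card_imset //; exact: perm_inj.
Qed.

Lemma perm_ord_eq k (p q : 'S_k) :
  (forall a b, (q a < q b) = (p a < p b)) -> q = p.
Proof.
move=> h; apply/permP=> a; apply: val_inj => /=.
rewrite -(rank_perm q) -(rank_perm p); apply: eq_card => b.
by rewrite !inE h.
Qed.

Lemma std_exists n (f : 'I_n -> nat) : injective f ->
  exists s : 'S_n, forall a b, (s a < s b) = (f a < f b).
Proof.
move=> finj.
pose g a := #|[set b | f b < f a]|.
have gn a : g a < n.
  rewrite -[n]card_ord -cardsT; apply: proper_card; apply/properP; split.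
    exact: subsetT.
  by exists a; rewrite ?inE ?ltnn.
have mono a b : f a < f b -> g a < g b.
  move=> h; apply: proper_card; apply/properP; split.
    by apply/subsetP=> c; rewrite !inE => /ltn_trans; apply.
  by exists a; rewrite !inE ?ltnn.
have gE a b : (g a < g b) = (f a < f b).
  case: (ltnP (f a) (f b)) => h; first by rewrite mono.
  case: (eqVneq a b) => [->|ne]; first by rewrite ltnn.
  have hne : f b != f a by apply: contra_neq ne => /finj ->.
  have hb : f b < f a by rewrite ltn_neqAle hne h.
  apply/negbTE; rewrite -leqNgt; exact: ltnW (mono _ _ hb).
pose g' a := Ordinal (gn a).
have g'inj : injective g'.
  move=> a b /(congr1 val) /= e; apply: contraTeq isT => ne.
  have : f a != f b by apply: contra_neq ne => /finj.
  by rewrite neq_ltn -!gE e ltnn.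
exists (perm g'inj) => a b; by rewrite !permE /= gE.
Qed.

Lemma ar_lt T1 T2 t1 t2 a1 a2 M : T1 < T2 -> t1 < M -> a1 < M ->
  T1*(M*M) + t1*M + a1 < T2*(M*M) + t2*M + a2.
Proof.
move=> hT ht ha.
have h1 : t1*M + a1 < M*M by nia.
have h2 : T1.+1 * (M*M) <= T2 * (M*M) by rewrite leq_mul2r hT orbT.
nia.
Qed.

Lemma ar_inj T1 T2 t1 t2 a1 a2 M : t1 < M -> a1 < M -> t2 < M -> a2 < M ->
  T1*(M*M) + t1*M + a1 = T2*(M*M) + t2*M + a2 -> [/\ T1 = T2, t1 = t2 & a1 = a2].
Proof.
move=> h1 h2 h3 h4.
have E T t a : T*(M*M) + t*M + a = (T*M + t)*M + a by rewrite mulnDl mulnA.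
rewrite !E => e.
have M0 : 0 < M by case: M h1 {E e h2 h3 h4}.
have ea : a1 = a2.
  by have := congr1 (modn^~ M) e; rewrite /= !modnMDl !modn_small.
have eb : T1*M + t1 = T2*M + t2.
  by have := congr1 (divn^~ M) e; rewrite /= !divnMDl // (divn_small h2) (divn_small h4) !addn0.
have et : t1 = t2.
  by have := congr1 (modn^~ M) eb; rewrite /= !modnMDl !modn_small.
have eT : T1 = T2.
  by have := congr1 (divn^~ M) eb; rewrite /= !divnMDl // (divn_small h1) (divn_small h3) !addn0.
by [].
Qed.

Lemma mod3 a N : a < 3 * N -> a %% N = if a < N then a else if a < 2 * N then a - N else a - 2 * N.
Proof.
move=> h; case: ifP => h1; first by rewrite modn_small.
case: ifP => h2.
  rewrite {1}(_ : a = (a - N) + N); last by lia.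
  rewrite modnDr modn_small //; lia.
rewrite {1}(_ : a = (a - 2 * N) + 2 * N); last by lia.
rewrite addnC modnMDl modn_small //; lia.
Qed.

Definition tierf (k L r : nat) : nat :=
  if r == L then 0 else if r == k then (if L == k.-1 - L then 2 else 1)
  else (if L == k.-1 - L then 1 else 2).
Definition pv k (p : 'S_k) (r : nat) : nat := oapp (fun a : 'I_k => val (p a)) 0 (insub r).
Definition keyf k L m (p : 'S_k) (z : nat) : nat :=
  let M := m * k.+1 + k.+1 in
  tierf k L (z %% k.+1) * (M * M) + (z %/ k.+1) * M + pv p (z %% k.+1).
Arguments keyf : clear implicits.

Lemma pvE k (p : 'S_k) (a : 'I_k) : pv p a = p a.
Proof. by rewrite /pv valK. Qed.

Lemma pv_le k (p : 'S_k) r : pv p r <= k.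
Proof. by rewrite /pv; case: insubP => //= a _ _; exact: ltnW. Qed.

Lemma key_tier_lt k L m (p : 'S_k) z1 z2 : z1 < m * k.+1 ->
  tierf k L (z1 %% k.+1) < tierf k L (z2 %% k.+1) -> keyf k L m p z1 < keyf k L m p z2.
Proof.
move=> hz ht; rewrite /keyf; apply: ar_lt => //.
  by apply: (leq_ltn_trans (leq_div _ _)); apply: (leq_trans hz); rewrite leq_addr.
by apply: (leq_ltn_trans (pv_le _ _)); rewrite ltn_addl.
Qed.

Lemma key_inj k L m (p : 'S_k) (Lk : L < k) z1 z2 : z1 < m * k.+1 -> z2 < m * k.+1 ->
  keyf k L m p z1 = keyf k L m p z2 -> z1 = z2.
Proof.
move=> h1 h2; rewrite /keyf => e.
have lt1 z : z < m * k.+1 -> z %/ k.+1 < m * k.+1 + k.+1.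
  by move=> hz; apply: (leq_ltn_trans (leq_div _ _)); apply: (leq_trans hz); rewrite leq_addr.
have lt2 r : pv p r < m * k.+1 + k.+1.
  by apply: (leq_ltn_trans (pv_le _ _)); rewrite ltn_addl.
have [eT et ea] := ar_inj (lt1 _ h1) (lt2 _) (lt1 _ h2) (lt2 _) e.
suff er : z1 %% k.+1 = z2 %% k.+1 by rewrite (divn_eq z1 k.+1) (divn_eq z2 k.+1) et er.
have hr1 : z1 %% k.+1 < k.+1 by rewrite ltn_mod.
have hr2 : z2 %% k.+1 < k.+1 by rewrite ltn_mod.
move: eT ea hr1 hr2; set r1 := z1 %% k.+1; set r2 := z2 %% k.+1 => eT ea hr1 hr2.
have [c1|c1] := boolP ((r1 < k) && (r1 != L) && (r2 < k) && (r2 != L)).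
  case/andP: c1 => /andP [/andP [c1 _] c2] _.
  move: ea; rewrite -[r1]/(val (Ordinal c1)) -[r2]/(val (Ordinal c2)) !pvE.
  by move=> /val_inj /perm_inj [].
move: eT c1; rewrite /tierf; do ! (case: eqP => ?); lia.
Qed.

Lemma exists_sigma k L m (p : 'S_k) (Lk : L < k) : exists s : 'S_(m * k.+1),
  forall a b, (s a < s b) = (keyf k L m p a < keyf k L m p b).
Proof.
apply: (std_exists (f := fun z : 'I_(m * k.+1) => keyf k L m p z)).
by move=> a b /(key_inj Lk (ltn_ord a) (ltn_ord b)) /val_inj.
Qed.

Lemma ce_lt n (s : 'S_n) (key : nat -> nat)
  (hs : forall a b : 'I_n, (s a < s b) = (key a < key b)) x y : 0 < n ->
  (cyc_entry s x < cyc_entry s y) = (key (x %% n) < key (y %% n)).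
Proof.
move=> n0; rewrite /cyc_entry.
case: insubP => [o _ ho|]; last by rewrite ltn_pmod.
case: insubP => [o' _ ho'|]; last by rewrite ltn_pmod.
by rewrite hs ho ho'.
Qed.

Ltac tsolve := rewrite /tierf; do ! (case: eqP => ?); lia.

Lemma constr_prop k L m (p q : 'S_k) (Lk : L < k) (k2 : 1 < k) (m0 : 0 < m)
  (aL : 'I_k) (haL : val aL = L) (hp : val (p aL) = 0) (hq : val (q aL) = 0)
  (s : 'S_(m * k.+1))
  (hs : forall a b, (s a < s b) = (keyf k L m p a < keyf k L m p b))
  (j : 'I_(m * k.+1))
  (hrel : forall a b : 'I_k, (cyc_entry s (j + a) < cyc_entry s (j + b)) = (q a < q b)) :
  q = p.
Proof.
set n := m * k.+1 in s hs j hrel *.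
have n0 : 0 < n by rewrite /n muln_gt0 m0.
have kn : k < n by apply: (leq_trans (ltnSn k)); rewrite /n leq_pmull.
have dv : k.+1 %| n by rewrite /n dvdn_mull.
set K := keyf k L m p in hs *.
have hce x y : (cyc_entry s x < cyc_entry s y) = (K (x %% n) < K (y %% n)) := ce_lt hs x y n0.
have minL (b : 'I_k) : b != aL -> K ((j + L) %% n) < K ((j + b) %% n).
  move=> nb; have := hrel aL b; rewrite hce haL => ->.
  rewrite hq lt0n; apply/eqP => h; move/eqP: nb; apply.
  by apply: (@perm_inj _ q); apply: val_inj => /=; rewrite h hq.
set r := (j + L) %% k.+1.
have rX : ((j + L) %% n) %% k.+1 = r by rewrite modn_dvdm.
have nb (b : nat) : b < k -> b != L -> tierf k L ((j + b) %% k.+1) < tierf k L r -> False.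
  move=> bk bL ht; have := minL (Ordinal bk).
  have -> : Ordinal bk != aL by apply/eqP => /(congr1 val) /=; rewrite haL => e; rewrite e eqxx in bL.
  move=> /(_ isT) h1.
  have h2 : K ((j + b) %% n) < K ((j + L) %% n).
    by apply: key_tier_lt; rewrite ?ltn_pmod // modn_dvdm // rX.
  by have := ltn_trans h1 h2; rewrite ltnn.
have rho b : b < k -> (j + b) %% k.+1 = (r + (k.+1 - L) + b) %% k.+1.
  move=> bk; rewrite -addnA modnDml addnA.
  rewrite (_ : j + L + (k.+1 - L) + b = (j + b) + k.+1) ?modnDr //; lia.
have rk : r <= k by rewrite -ltnS ltn_mod.
have rL : r = L.
  apply/eqP; apply: contraT => rnL; exfalso.
  have H b : b < k -> b != L ->
    tierf k L ((r + (k.+1 - L) + b) %% k.+1) < tierf k L r -> False.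
    by move=> bk bL; rewrite -rho //; apply: nb.
  have Hm b v c : b < k -> b != L -> v <= k -> r + (k.+1 - L) + b = v + c * k.+1 ->
    tierf k L v < tierf k L r -> False.
    move=> bk bL vk e ht; apply: (H b bk bL); rewrite e addnC modnMDl modn_small //.
  clearbody r. clear -Hm rk rnL Lk k2. move/eqP: rnL => rnL.
  case: (ltngtP r L) => hrL; last by rewrite hrL in rnL.
    case: (eqVneq L (k.-1 - L)) => hLR.
      by apply: (Hm (L + L - r) L 1); [lia|lia|lia|lia|tsolve].
    by apply: (Hm (L - r - 1) k 0); [lia|lia|lia|lia|tsolve].
  case: (ltngtP r k) => hrk; last first.
    case: (ltngtP L (k.-1 - L)) => hLR.
    - by apply: (Hm (L + L + 1) L 2); [lia|lia|lia|lia|tsolve].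
    - by apply: (Hm (L + L - k) L 1); [lia|lia|lia|lia|tsolve].
    - by apply: (Hm (L - 1) k.-1 1); [lia|lia|lia|lia|tsolve].
    - lia.
  case: (eqVneq L (k.-1 - L)) => hLR.
    by apply: (Hm (L + L - r) L 1); [lia|lia|lia|lia|tsolve].
  by apply: (Hm (L + k - r) k 1); [lia|lia|lia|lia|tsolve].
have jLn : j + L < n.
  rewrite ltnNge; apply/negP => h.
  have e1 : (j + L) %% n = j + L - n.
    rewrite {1}(_ : j + L = (j + L - n) + n); last by lia.
    by rewrite modnDr modn_small //; have := ltn_ord j; lia.
  have := leq_mod ((j + L) %% n) k.+1; rewrite rX rL e1; have := ltn_ord j; lia.
set t := (j + L) %/ k.+1.
have ejt : j + L = t * k.+1 + L.
  by rewrite -[in RHS]rL {1}(divn_eq (j + L) k.+1).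
have tm : t < m.
  rewrite ltnNge; apply/negP => h; have := leq_mul2r k.+1 m t; rewrite h orbT => h2.
  by have := leq_trans jLn h2; rewrite ejt ltnNge leq_addr.
have tm' : t * k.+1 + k.+1 <= n by rewrite /n addnC -mulSn leq_mul2r tm orbT.
have ej : j = t * k.+1 :> nat by apply/eqP; rewrite -(eqn_add2r L) ejt.
have win a : a < k -> (j + a) %% n = t * k.+1 + a.
  by move=> ak; rewrite ej modn_small //; lia.
have winr a : a < k -> (t * k.+1 + a) %% k.+1 = a.
  by move=> ak; rewrite modnMDl modn_small // ltnS ltnW.
have wind a : a < k -> (t * k.+1 + a) %/ k.+1 = t.
  by move=> ak; rewrite divnMDl // divn_small ?addn0 // ltnS ltnW.
have keyw (a : 'I_k) : K ((j + a) %% n) =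
    tierf k L a * ((m * k.+1 + k.+1) * (m * k.+1 + k.+1)) + t * (m * k.+1 + k.+1) + p a.
  by rewrite win // /K /keyf winr // wind // pvE.
have tiera (a : 'I_k) : a != aL -> tierf k L a = (if L == k.-1 - L then 1 else 2).
  move=> na; have aneq : (a : nat) <> L.
    by move=> e; move/eqP: na; apply; apply: val_inj; rewrite /= e haL.
  have ak : (a : nat) < k := ltn_ord a.
  rewrite /tierf; do ! (case: eqP => ?); lia.
have tierL : tierf k L aL = 0 by rewrite /tierf haL eqxx.
have pnz (b : 'I_k) : b != aL -> 0 < p b.
  move=> nb'; rewrite lt0n; apply/eqP => h; move/eqP: nb'; apply.
  by apply: (@perm_inj _ p); apply: val_inj => /=; rewrite h hp.
apply: perm_ord_eq => a b.
rewrite -hrel hce.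
case: (eqVneq a aL) => [->|na]; case: (eqVneq b aL) => [->|nb'].
- by rewrite !ltnn.
- rewrite hp pnz //; apply: key_tier_lt; first by rewrite ltn_pmod.
  by rewrite !modn_dvdm // ej !winr // tierL tiera //; case: ifP.
- rewrite hp ltn0; apply/negbTE; rewrite -leqNgt ltnW //; apply: key_tier_lt.
    by rewrite ltn_pmod.
  by rewrite !modn_dvdm // ej !winr // tierL tiera //; case: ifP.
- by rewrite !keyw !tiera // ltn_add2l.
Qed.

Lemma minimal_of k (Pi : {set 'S_k}) : unavoidable Pi ->
  (forall p, p \in Pi -> forall N, exists n (s : 'S_n),
      N <= n /\ forall q, q \in Pi -> cyc_contains q s -> q = p) ->
  minimal_unavoidable Pi.
Proof.
move=> hu H; split => // Pi' /properP [sub [p pPi pnot]] [N HN].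
have [n [s [Nn hs]]] := H p pPi N.
apply: (HN n Nn s) => q qin cont.
have e := hs q (subsetP sub q qin) cont; subst q.
by rewrite qin in pnot.
Qed.

Lemma min_constr k i (hi : 1 <= i) (hik : i <= k) (p : 'S_k) (hp : p \in Pi_min k i) N :
  exists n (s : 'S_n), N <= n /\ forall q, q \in Pi_min k i -> cyc_contains q s -> q = p.
Proof.
case: (ltnP 1 k) => k2; last first.
  exists N, 1%g; split => // q _ _; apply: perm_ord_eq => a b.
  have ab : a = b by apply: val_inj => /=; have := ltn_ord a; have := ltn_ord b; lia.
  by rewrite ab !ltnn.
have Lk : i.-1 < k by lia.
have [s hs] := exists_sigma N.+1 p Lk.
exists (N.+1 * k.+1), s; split.
  by apply: (leq_trans (leqnSn N)); rewrite leq_pmulr.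
move=> q; rewrite inE => /existsP [aL /andP [/eqP haL /eqP hq]] [_ [j hj]].
move: hp; rewrite inE => /existsP [a' /andP [/eqP ha' /eqP hp']].
have ea : a' = aL by apply: val_inj; rewrite /= ha' haL.
subst a'.
exact: (constr_prop Lk k2 (ltn0Sn N) haL hp' hq hs hj).
Qed.

Lemma ce_val n (s : 'S_n) (n0 : 0 < n) x :
  cyc_entry s x = s (Ordinal (ltn_pmod x n0)).
Proof.
rewrite /cyc_entry; case: insubP => [o _ ho|]; last by rewrite ltn_pmod.
by congr (val (s _)); apply: val_inj.
Qed.

Lemma unav_min k i (hi : 1 <= i) (hik : i <= k) : unavoidable (Pi_min k i).
Proof.
exists k => n kn s hav.
have n0 : 0 < n by lia.
have k0 : 0 < k by lia.
set L := i.-1.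
have Lk : L < k by rewrite /L; move: hi hik; clear; case: i.
have Ln : L < n := leq_trans Lk kn.
pose x0 := (s^-1 (Ordinal n0))%g.
pose j := Ordinal (ltn_pmod (x0 + n - L) n0).
pose f (a : 'I_k) := cyc_entry s (j + a).
have finj : injective f.
  move=> a b; rewrite /f !ce_val => /val_inj /perm_inj /(congr1 val) /= /eqP.
  rewrite eqn_modDl !modn_small ?(leq_trans (ltn_ord _) kn) // => /eqP e.
  exact: val_inj.
have [q hq] := std_exists finj.
pose aL : 'I_k := Ordinal Lk.
have jL : (j + L) %% n = x0.
  rewrite /= modnDml subnK; last by lia.
  by rewrite modnDr modn_small.
have fL0 : f aL = 0.
  rewrite /f ce_val /=.
  have -> : Ordinal (ltn_pmod (j + L) n0) = x0 by apply: val_inj; rewrite /= jL.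
  by rewrite permKV.
apply: (hav q).
  rewrite inE; apply/existsP; exists aL; rewrite eqxx /=.
  rewrite -leqn0 leqNgt; apply/negP => qL.
  pose b := (q^-1 (Ordinal k0))%g.
  by have := hq b aL; rewrite /b permKV /= qL fL0 ltn0.
by split => //; exists j => a b; rewrite hq.
Qed.

Section Compl.

Lemma cperm_inj n (s : 'S_n) : injective (fun x => rev_ord (s x)).
Proof. by move=> x y e; apply: (perm_inj (s := s)); apply: rev_ord_inj. Qed.

Definition cperm n (s : 'S_n) : 'S_n := perm (@cperm_inj n s).

Lemma cpermE n (s : 'S_n) x : cperm s x = rev_ord (s x).
Proof. by rewrite permE. Qed.

Lemma cpermK n (s : 'S_n) : cperm (cperm s) = s.
Proof. by apply/permP => x; rewrite !cpermE rev_ordK. Qed.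

Lemma ce_c n (s : 'S_n) x : cyc_entry (cperm s) x = n.-1 - cyc_entry s x.
Proof.
rewrite /cyc_entry; case: insubP => [o _ ho|]; last first.
  by case: n s => // n s; rewrite ltn_pmod.
by rewrite cpermE /=; have := ltn_ord (s o); lia.
Qed.

Lemma ce_ltn n (s : 'S_n) x : 0 < n -> cyc_entry s x < n.
Proof. by move=> n0; rewrite ce_val. Qed.

Lemma contains_c k (p : 'S_k) n (s : 'S_n) :
  cyc_contains p s -> cyc_contains (cperm p) (cperm s).
Proof.
move=> [kn [j h]]; split => //; exists j => a b.
have n0 : 0 < n by case: n s j {h kn} => [|n] s [].
rewrite !ce_c !cpermE /=.
have := ce_ltn s (j + a) n0; have := ce_ltn s (j + b) n0.
have := ltn_ord (p a); have := ltn_ord (p b); have := h b a.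
case: (ltnP (cyc_entry s (j + b)) (cyc_entry s (j + a))) => h1;
case: (ltnP (p b) (p a)) => h2 //= _; lia.
Qed.

Lemma Pi_max_c k i (p : 'S_k) : (p \in Pi_max k i) = (cperm p \in Pi_min k i).
Proof.
rewrite !inE; apply: eq_existsb => a; rewrite cpermE /=; congr (_ && _).
have := ltn_ord (p a); case: eqP => h1; case: eqP => h2 //; lia.
Qed.

End Compl.

Lemma unav_max k i (hi : 1 <= i) (hik : i <= k) : unavoidable (Pi_max k i).
Proof.
have [N HN] := unav_min hi hik.
exists N => n Nn s hav; apply: (HN n Nn (cperm s)) => q qin cont.
have := contains_c cont; rewrite cpermK; apply: hav.
by rewrite Pi_max_c cpermK.
Qed.

Lemma max_constr k i (hi : 1 <= i) (hik : i <= k) (p : 'S_k) (hp : p \in Pi_max k i) N :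
  exists n (s : 'S_n), N <= n /\ forall q, q \in Pi_max k i -> cyc_contains q s -> q = p.
Proof.
rewrite Pi_max_c in hp.
have [n [s [Nn H]]] := min_constr hi hik hp N.
exists n, (cperm s); split => // q qin cont.
have := contains_c cont; rewrite cpermK => /H.
rewrite -Pi_max_c => /(_ qin) e.
by rewrite -(cpermK q) e cpermK.
Qed.

Unset Implicit Arguments.

Theorem theorem6p1 (k i : nat) (hi : 1 <= i) (hik : i <= k) :
  minimal_unavoidable (Pi_min k i) /\ minimal_unavoidable (Pi_max k i).
Proof.
split; apply: minimal_of.
- exact: unav_min.
- by move=> p hp N; apply: min_constr.
- exact: unav_max.
- by move=> p hp N; apply: max_constr.
Qed.
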